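(* Let $\mathcal{P}$ be the regular octahedron, centered at the origin and scaled so that its midsphere (the sphere touching the midpoint of every edge) is the unit sphere $\mathbb{S}^2\subset\mathbb{R}^3$. For $\delta\in[0,\pi/2]$ let $L(\delta)$ be the configuration of the twelve lines obtained from the lines containing the twelve edges of $\mathcal{P}$ by rotating each line, inside the plane tangent to $\mathbb{S}^2$ at the midpoint $m$ of that edge, about the axis through the origin and $m$ by the angle $\delta$, all lines being rotated in the same sense (counterclockwise as viewed from the tip of the axis, i.e. from outside the sphere). Let $d(\delta)$ denote the minimal distance between two distinct lines of $L(\delta)$. Then the maximum of $d(\delta)$ over $\delta\in[0,\pi/2]$ is attained at the angle $\delta_{\mathcal{O}}$ with $$\tan(\delta_{\mathcal{O}})=\frac{3^{1/4}}{\sqrt{2}}$$ (approximately $\delta_{\mathcal{O}}\simeq 0.74946$), and the square of this maximal distance is the value at $\delta=\delta_{\mathcal{O}}$ of the function $$-\,\frac{4\sin^2(2\delta)}{\bigl(\cos(2\delta)-3\bigr)\bigl(\cos(2\delta)+5\bigr)},$$ namely $$d(\delta_{\mathcal{O}})^2=2-\sqrt{3}=\frac{(\sqrt{3}-1)^2}{2}\simeq 0.26795 .$$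
   Context: Each line of $L(\delta)$ is tangent to the unit sphere (at the corresponding edge midpoint). At $\delta=0$ the lines contain the edges of the octahedron; at $\delta=\pi/2$ they contain the edges of the dual cube (with the same midsphere). The rotation is carried out so that the configuration $L(\delta)$ is invariant under the group of proper (orientation-preserving) symmetries of the octahedron. *)

(* Defs.v *)
From HB Require Import structures.
From mathcomp Require Import all_boot all_order all_algebra.
From mathcomp Require Import all_classical all_reals all_analysis.
Set Implicit Arguments. Unset Strict Implicit. Unset Printing Implicit Defensive.
Import Order.TTheory GRing.Theory Num.Theory.
Local Open Scope ring_scope.
Local Open Scope classical_set_scope.

Section Octa.
Variable R : realType.

Definition vec := 'rV[R]_3.
Definition enorm (x : vec) : R := Num.sqrt (\sum_(i < 3) x ord0 i ^+ 2).
Definition cross (u v : vec) : vec :=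
  \row_(k < 3) (u ord0 (k + 1) * v ord0 (k + 2) - u ord0 (k + 2) * v ord0 (k + 1)).

Definition line_dist (p u q v : vec) : R :=
  inf [set r | exists s t : R, r = enorm ((p + s *: u) - (q + t *: v))].

(* vertices of the octahedron with unit midsphere: sign * sqrt 2 * e_k *)
Definition vert := ('I_3 * bool)%type.
Definition vtx (a : vert) : vec :=
  \row_(k < 3) (if k == a.1 then (if a.2 then Num.sqrt 2 else - Num.sqrt 2) else 0).

(* an edge = pair of vertices on different axes, listed with smaller axis first;
   there are exactly 12 of them *)
Definition is_edge (e : vert * vert) : Prop := (e.1.1 < e.2.1)%N.

Definition edge_mid (e : vert * vert) : vec := (2%:R)^-1 *: (vtx e.1 + vtx e.2).
Definition edge_dir (e : vert * vert) : vec := vtx e.2 - vtx e.1.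

(* line of L(delta) for edge e: through the midpoint m, direction rotated by
   delta about the axis O m (counterclockwise seen from outside) *)
Definition Ldir (delta : R) (e : vert * vert) : vec :=
  cos delta *: edge_dir e + sin delta *: cross (edge_mid e) (edge_dir e).

Definition dmin (delta : R) : R :=
  inf [set r | exists e1 e2, [/\ is_edge e1, is_edge e2, e1 <> e2 &
         r = line_dist (edge_mid e1) (Ldir delta e1) (edge_mid e2) (Ldir delta e2)]].

Definition fO (delta : R) : R :=
  - (4 * sin (2 * delta) ^+ 2) / ((cos (2 * delta) - 3) * (cos (2 * delta) + 5)).

End Octa.

(* Main.v *)
Require Import Defs.
From HB Require Import structures.
From mathcomp Require Import all_boot all_order all_algebra.
From mathcomp Require Import all_classical all_reals all_analysis.
From mathcomp Require Import ring lra.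
Import Order.TTheory GRing.Theory Num.Theory.
Local Open Scope ring_scope.

Section S.
Set Implicit Arguments. Unset Strict Implicit.
Variable R : realType.

Definition mk3 (a b c : R) : vec R := \row_(k < 3) [:: a; b; c]`_k.
Definition i0 : 'I_3 := @Ordinal 3 0 isT.
Definition i1 : 'I_3 := @Ordinal 3 1 isT.
Definition i2 : 'I_3 := @Ordinal 3 2 isT.
Definition dot (u v : vec R) : R := \sum_(i < 3) u ord0 i * v ord0 i.

Lemma vecE (v : vec R) : v = mk3 (v ord0 i0) (v ord0 i1) (v ord0 i2).
Proof.
apply/rowP => k; rewrite !mxE; case: k => [[|[|[|k]]] hk] //=; congr (v _ _); exact/val_inj.
Qed.

Lemma mk3_add a b c d e f : mk3 a b c + mk3 d e f = mk3 (a+d) (b+e) (c+f).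
Proof. by apply/rowP => k; rewrite !mxE; case: k => [[|[|[|k]]] hk]. Qed.
Lemma mk3_opp a b c : - mk3 a b c = mk3 (-a) (-b) (-c).
Proof. by apply/rowP => k; rewrite !mxE; case: k => [[|[|[|k]]] hk] //=; rewrite oppr0. Qed.
Lemma mk3_sub a b c d e f : mk3 a b c - mk3 d e f = mk3 (a-d) (b-e) (c-f).
Proof. by rewrite mk3_opp mk3_add. Qed.
Lemma mk3_scale x a b c : x *: mk3 a b c = mk3 (x*a) (x*b) (x*c).
Proof. by apply/rowP => k; rewrite !mxE; case: k => [[|[|[|k]]] hk] //=; rewrite mulr0. Qed.
Lemma cross_mk3 a b c d e f :
  cross (mk3 a b c) (mk3 d e f) = mk3 (b*f - c*e) (c*d - a*f) (a*e - b*d).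
Proof.
apply/rowP => k; rewrite !mxE; case: k => [[|[|[|k]]] hk] //=.
Qed.
Lemma dot_mk3 a b c d e f : dot (mk3 a b c) (mk3 d e f) = a*d + b*e + c*f.
Proof. by rewrite /dot !big_ord_recr big_ord0 /= !mxE /= add0r. Qed.
Lemma enormE u : enorm u = Num.sqrt (dot u u).
Proof. by rewrite /enorm /dot; congr Num.sqrt; apply: eq_bigr => i _; rewrite expr2. Qed.


Local Notation r := (Num.sqrt (2%:R : R)).
Lemma vtx0t : vtx R (i0, true) = mk3 r 0 0.
Proof. by apply/rowP => k; rewrite !mxE; case: k => [[|[|[|k]]] hk]. Qed.
Lemma vtx0f : vtx R (i0, false) = mk3 (-r) 0 0.
Proof. by apply/rowP => k; rewrite !mxE; case: k => [[|[|[|k]]] hk]. Qed.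
Lemma vtx1t : vtx R (i1, true) = mk3 0 r 0.
Proof. by apply/rowP => k; rewrite !mxE; case: k => [[|[|[|k]]] hk]. Qed.
Lemma vtx1f : vtx R (i1, false) = mk3 0 (-r) 0.
Proof. by apply/rowP => k; rewrite !mxE; case: k => [[|[|[|k]]] hk]. Qed.
Lemma vtx2t : vtx R (i2, true) = mk3 0 0 r.
Proof. by apply/rowP => k; rewrite !mxE; case: k => [[|[|[|k]]] hk]. Qed.
Lemma vtx2f : vtx R (i2, false) = mk3 0 0 (-r).
Proof. by apply/rowP => k; rewrite !mxE; case: k => [[|[|[|k]]] hk]. Qed.

Lemma sqrt2_sq : r ^+ 2 = 2.
Proof. by rewrite sqr_sqrtr // ler0n. Qed.

Definition wn (d : R) e1 e2 := dot (edge_mid R e1 - edge_mid R e2) (cross (Ldir d e1) (Ldir d e2)).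
Definition Dn (d : R) e1 e2 := dot (cross (Ldir d e1) (Ldir d e2)) (cross (Ldir d e1) (Ldir d e2)).
Definition typ (k : nat) (d : R) e1 e2 : Prop :=
  let c := cos d in let s := sin d in
  match k with
  | 0 => wn d e1 e2 ^+ 2 = (8 * c * s) ^+ 2 /\ Dn d e1 e2 = 32 * c ^+ 2 - 16 * c ^+ 4
  | 1 => wn d e1 e2 ^+ 2 = (4 * c * s) ^+ 2 /\ Dn d e1 e2 = 16 - 4 * c ^+ 4
  | 2 => wn d e1 e2 ^+ 2 = (16 * c * s) ^+ 2 /\ Dn d e1 e2 = 64 * c ^+ 2 - 64 * c ^+ 4
  | 3 => wn d e1 e2 ^+ 2 = (4 * c * s + 4 * r - 8 * r * c ^+ 2) ^+ 2 /\
         Dn d e1 e2 = 16 - 32 * c ^+ 2 + 28 * c ^+ 4 - 16 * r * c ^+ 3 * s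
  | _ => wn d e1 e2 ^+ 2 = (4 * c * s - 4 * r + 8 * r * c ^+ 2) ^+ 2 /\
         Dn d e1 e2 = 16 - 32 * c ^+ 2 + 28 * c ^+ 4 + 16 * r * c ^+ 3 * s
  end.
Definition E0 : vert * vert := ((i0, false), (i1, false)).
Definition E1 : vert * vert := ((i0, false), (i1, true)).
Definition E2 : vert * vert := ((i0, false), (i2, false)).
Definition E3 : vert * vert := ((i0, false), (i2, true)).
Definition E4 : vert * vert := ((i0, true), (i1, false)).
Definition E5 : vert * vert := ((i0, true), (i1, true)).
Definition E6 : vert * vert := ((i0, true), (i2, false)).
Definition E7 : vert * vert := ((i0, true), (i2, true)).
Definition E8 : vert * vert := ((i1, false), (i2, false)).
Definition E9 : vert * vert := ((i1, false), (i2, true)).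
Definition E10 : vert * vert := ((i1, true), (i2, false)).
Definition E11 : vert * vert := ((i1, true), (i2, true)).

End S.
Unset Implicit Arguments. Set Strict Implicit.
Ltac simp3 := rewrite /wn /Dn /Ldir /edge_mid /edge_dir /= ?vtx0t ?vtx0f ?vtx1t ?vtx1f ?vtx2t ?vtx2f;
  do 5 rewrite ?mk3_opp ?mk3_add ?mk3_scale ?cross_mk3; rewrite !dot_mk3.

Local Open Scope classical_set_scope.

Section S2.
Variable R : realType.

Lemma inf_min (E : set R) m : E m -> (forall x, E x -> m <= x) -> inf E = m.
Proof.
move=> Em lb; apply/le_anti/andP; split.
  by apply: ge_inf => //; exists m => x /lb.
by apply: lb_le_inf; [exists m | move=> x /lb].
Qed.

Lemma line_dist_eq (p u q v : vec R) :
  dot (cross u v) (cross u v) != 0 ->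
  line_dist p u q v =
  Num.sqrt ((dot (p - q) (cross u v)) ^+ 2 / dot (cross u v) (cross u v)).
Proof.
rewrite (vecE p) (vecE u) (vecE q) (vecE v).
move: (p ord0 i0) (p ord0 i1) (p ord0 i2) (u ord0 i0) (u ord0 i1) (u ord0 i2).
move: (q ord0 i0) (q ord0 i1) (q ord0 i2) (v ord0 i0) (v ord0 i1) (v ord0 i2).
move=> q0 q1 q2 v0 v1 v2 p0 p1 p2 u0 u1 u2.
rewrite !cross_mk3 !mk3_sub !dot_mk3.
set n0 := (u1 * v2 - u2 * v1); set n1 := (u2 * v0 - u0 * v2); set n2 := (u0 * v1 - u1 * v0).
set w0 := p0 - q0; set w1 := p1 - q1; set w2 := p2 - q2.
set nn := _ + _ + n2 * n2 => nn0.
have nnpos : 0 < nn by rewrite lt_def nn0 /nn -!expr2 !addr_ge0 ?sqr_ge0.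
rewrite /line_dist; apply: inf_min.
  set wn := _ + _ + _.
  pose s := - ((w1 * v2 - w2 * v1) * n0 + (w2 * v0 - w0 * v2) * n1 + (w0 * v1 - w1 * v0) * n2) / nn.
  pose t := - ((w1 * u2 - w2 * u1) * n0 + (w2 * u0 - w0 * u2) * n1 + (w0 * u1 - w1 * u0) * n2) / nn.
  exists s, t.
  rewrite enormE !mk3_scale !mk3_add !mk3_sub dot_mk3.
  have e0 : p0 + s * u0 - (q0 + t * v0) = wn / nn * n0.
    by rewrite /s /t /wn /nn /n0 /n1 /n2 /w0 /w1 /w2; field; rewrite -/n0 -/n1 -/n2.
  have e1 : p1 + s * u1 - (q1 + t * v1) = wn / nn * n1.
    by rewrite /s /t /wn /nn /n0 /n1 /n2 /w0 /w1 /w2; field; rewrite -/n0 -/n1 -/n2.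
  have e2 : p2 + s * u2 - (q2 + t * v2) = wn / nn * n2.
    by rewrite /s /t /wn /nn /n0 /n1 /n2 /w0 /w1 /w2; field; rewrite -/n0 -/n1 -/n2.
  rewrite e0 e1 e2; congr Num.sqrt; rewrite /nn; field; exact: nn0.
move=> x [s [t ->]].
rewrite enormE !mk3_scale !mk3_add !mk3_sub dot_mk3 ler_sqrt; last first.
  by rewrite -!expr2 !addr_ge0 ?sqr_ge0.
rewrite ler_pdivrMr //.
set x0 := p0 + s * u0 - (q0 + t * v0).
set x1 := p1 + s * u1 - (q1 + t * v1).
set x2 := p2 + s * u2 - (q2 + t * v2).
have exn : w0 * n0 + w1 * n1 + w2 * n2 = x0 * n0 + x1 * n1 + x2 * n2.
  by rewrite /x0 /x1 /x2 /w0 /w1 /w2 /n0 /n1 /n2; ring.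
rewrite exn -subr_ge0.
have -> : (x0 * x0 + x1 * x1 + x2 * x2) * nn - (x0 * n0 + x1 * n1 + x2 * n2) ^+ 2
   = (x1 * n2 - x2 * n1) ^+ 2 + (x2 * n0 - x0 * n2) ^+ 2 + (x0 * n1 - x1 * n0) ^+ 2.
  by rewrite /nn; ring.
by rewrite !addr_ge0 ?sqr_ge0.
Qed.
End S2.

Lemma wn_sym (R : realType) (d : R) e1 e2 : wn d e2 e1 = wn d e1 e2.
Proof.
rewrite /wn (vecE (edge_mid R e1)) (vecE (edge_mid R e2)) (vecE (Ldir d e1)) (vecE (Ldir d e2)).
by rewrite !mk3_sub !cross_mk3 !dot_mk3; ring.
Qed.
Lemma Dn_sym (R : realType) (d : R) e1 e2 : Dn d e2 e1 = Dn d e1 e2.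
Proof.
rewrite /Dn (vecE (Ldir d e1)) (vecE (Ldir d e2)).
by rewrite !cross_mk3 !dot_mk3; ring.
Qed.
Lemma typ_sym (R : realType) k (d : R) e1 e2 : typ k d e1 e2 -> typ k d e2 e1.
Proof. by rewrite /typ wn_sym Dn_sym. Qed.
Lemma P_0_1 (R : realType) (d : R) : typ 0 d E0 E1.
Proof. rewrite /typ /E0 /E1; simp3; split; (field: (sqrt2_sq R) (sin2cos2 d)) => //. Qed.
Lemma P_0_2 (R : realType) (d : R) : typ 1 d E0 E2.
Proof. rewrite /typ /E0 /E2; simp3; split; (field: (sqrt2_sq R) (sin2cos2 d)) => //. Qed.
Lemma P_0_3 (R : realType) (d : R) : typ 1 d E0 E3.
Proof. rewrite /typ /E0 /E3; simp3; split; (field: (sqrt2_sq R) (sin2cos2 d)) => //. Qed.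
Lemma P_0_4 (R : realType) (d : R) : typ 0 d E0 E4.
Proof. rewrite /typ /E0 /E4; simp3; split; (field: (sqrt2_sq R) (sin2cos2 d)) => //. Qed.
Lemma P_0_5 (R : realType) (d : R) : typ 2 d E0 E5.
Proof. rewrite /typ /E0 /E5; simp3; split; (field: (sqrt2_sq R) (sin2cos2 d)) => //. Qed.
Lemma P_0_6 (R : realType) (d : R) : typ 3 d E0 E6.
Proof. rewrite /typ /E0 /E6; simp3; split; (field: (sqrt2_sq R) (sin2cos2 d)) => //. Qed.
Lemma P_0_7 (R : realType) (d : R) : typ 4 d E0 E7.
Proof. rewrite /typ /E0 /E7; simp3; split; (field: (sqrt2_sq R) (sin2cos2 d)) => //. Qed.
Lemma P_0_8 (R : realType) (d : R) : typ 1 d E0 E8.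
Proof. rewrite /typ /E0 /E8; simp3; split; (field: (sqrt2_sq R) (sin2cos2 d)) => //. Qed.
Lemma P_0_9 (R : realType) (d : R) : typ 1 d E0 E9.
Proof. rewrite /typ /E0 /E9; simp3; split; (field: (sqrt2_sq R) (sin2cos2 d)) => //. Qed.
Lemma P_0_10 (R : realType) (d : R) : typ 4 d E0 E10.
Proof. rewrite /typ /E0 /E10; simp3; split; (field: (sqrt2_sq R) (sin2cos2 d)) => //. Qed.
Lemma P_0_11 (R : realType) (d : R) : typ 3 d E0 E11.
Proof. rewrite /typ /E0 /E11; simp3; split; (field: (sqrt2_sq R) (sin2cos2 d)) => //. Qed.
Lemma P_1_2 (R : realType) (d : R) : typ 1 d E1 E2.
Proof. rewrite /typ /E1 /E2; simp3; split; (field: (sqrt2_sq R) (sin2cos2 d)) => //. Qed.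
Lemma P_1_3 (R : realType) (d : R) : typ 1 d E1 E3.
Proof. rewrite /typ /E1 /E3; simp3; split; (field: (sqrt2_sq R) (sin2cos2 d)) => //. Qed.
Lemma P_1_4 (R : realType) (d : R) : typ 2 d E1 E4.
Proof. rewrite /typ /E1 /E4; simp3; split; (field: (sqrt2_sq R) (sin2cos2 d)) => //. Qed.
Lemma P_1_5 (R : realType) (d : R) : typ 0 d E1 E5.
Proof. rewrite /typ /E1 /E5; simp3; split; (field: (sqrt2_sq R) (sin2cos2 d)) => //. Qed.
Lemma P_1_6 (R : realType) (d : R) : typ 4 d E1 E6.
Proof. rewrite /typ /E1 /E6; simp3; split; (field: (sqrt2_sq R) (sin2cos2 d)) => //. Qed.
Lemma P_1_7 (R : realType) (d : R) : typ 3 d E1 E7.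
Proof. rewrite /typ /E1 /E7; simp3; split; (field: (sqrt2_sq R) (sin2cos2 d)) => //. Qed.
Lemma P_1_8 (R : realType) (d : R) : typ 3 d E1 E8.
Proof. rewrite /typ /E1 /E8; simp3; split; (field: (sqrt2_sq R) (sin2cos2 d)) => //. Qed.
Lemma P_1_9 (R : realType) (d : R) : typ 4 d E1 E9.
Proof. rewrite /typ /E1 /E9; simp3; split; (field: (sqrt2_sq R) (sin2cos2 d)) => //. Qed.
Lemma P_1_10 (R : realType) (d : R) : typ 1 d E1 E10.
Proof. rewrite /typ /E1 /E10; simp3; split; (field: (sqrt2_sq R) (sin2cos2 d)) => //. Qed.
Lemma P_1_11 (R : realType) (d : R) : typ 1 d E1 E11.
Proof. rewrite /typ /E1 /E11; simp3; split; (field: (sqrt2_sq R) (sin2cos2 d)) => //. Qed.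
Lemma P_2_3 (R : realType) (d : R) : typ 0 d E2 E3.
Proof. rewrite /typ /E2 /E3; simp3; split; (field: (sqrt2_sq R) (sin2cos2 d)) => //. Qed.
Lemma P_2_4 (R : realType) (d : R) : typ 4 d E2 E4.
Proof. rewrite /typ /E2 /E4; simp3; split; (field: (sqrt2_sq R) (sin2cos2 d)) => //. Qed.
Lemma P_2_5 (R : realType) (d : R) : typ 3 d E2 E5.
Proof. rewrite /typ /E2 /E5; simp3; split; (field: (sqrt2_sq R) (sin2cos2 d)) => //. Qed.
Lemma P_2_6 (R : realType) (d : R) : typ 0 d E2 E6.
Proof. rewrite /typ /E2 /E6; simp3; split; (field: (sqrt2_sq R) (sin2cos2 d)) => //. Qed.
Lemma P_2_7 (R : realType) (d : R) : typ 2 d E2 E7.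
Proof. rewrite /typ /E2 /E7; simp3; split; (field: (sqrt2_sq R) (sin2cos2 d)) => //. Qed.
Lemma P_2_8 (R : realType) (d : R) : typ 1 d E2 E8.
Proof. rewrite /typ /E2 /E8; simp3; split; (field: (sqrt2_sq R) (sin2cos2 d)) => //. Qed.
Lemma P_2_9 (R : realType) (d : R) : typ 3 d E2 E9.
Proof. rewrite /typ /E2 /E9; simp3; split; (field: (sqrt2_sq R) (sin2cos2 d)) => //. Qed.
Lemma P_2_10 (R : realType) (d : R) : typ 1 d E2 E10.
Proof. rewrite /typ /E2 /E10; simp3; split; (field: (sqrt2_sq R) (sin2cos2 d)) => //. Qed.
Lemma P_2_11 (R : realType) (d : R) : typ 4 d E2 E11.
Proof. rewrite /typ /E2 /E11; simp3; split; (field: (sqrt2_sq R) (sin2cos2 d)) => //. Qed.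
Lemma P_3_4 (R : realType) (d : R) : typ 3 d E3 E4.
Proof. rewrite /typ /E3 /E4; simp3; split; (field: (sqrt2_sq R) (sin2cos2 d)) => //. Qed.
Lemma P_3_5 (R : realType) (d : R) : typ 4 d E3 E5.
Proof. rewrite /typ /E3 /E5; simp3; split; (field: (sqrt2_sq R) (sin2cos2 d)) => //. Qed.
Lemma P_3_6 (R : realType) (d : R) : typ 2 d E3 E6.
Proof. rewrite /typ /E3 /E6; simp3; split; (field: (sqrt2_sq R) (sin2cos2 d)) => //. Qed.
Lemma P_3_7 (R : realType) (d : R) : typ 0 d E3 E7.
Proof. rewrite /typ /E3 /E7; simp3; split; (field: (sqrt2_sq R) (sin2cos2 d)) => //. Qed.
Lemma P_3_8 (R : realType) (d : R) : typ 4 d E3 E8.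
Proof. rewrite /typ /E3 /E8; simp3; split; (field: (sqrt2_sq R) (sin2cos2 d)) => //. Qed.
Lemma P_3_9 (R : realType) (d : R) : typ 1 d E3 E9.
Proof. rewrite /typ /E3 /E9; simp3; split; (field: (sqrt2_sq R) (sin2cos2 d)) => //. Qed.
Lemma P_3_10 (R : realType) (d : R) : typ 3 d E3 E10.
Proof. rewrite /typ /E3 /E10; simp3; split; (field: (sqrt2_sq R) (sin2cos2 d)) => //. Qed.
Lemma P_3_11 (R : realType) (d : R) : typ 1 d E3 E11.
Proof. rewrite /typ /E3 /E11; simp3; split; (field: (sqrt2_sq R) (sin2cos2 d)) => //. Qed.
Lemma P_4_5 (R : realType) (d : R) : typ 0 d E4 E5.
Proof. rewrite /typ /E4 /E5; simp3; split; (field: (sqrt2_sq R) (sin2cos2 d)) => //. Qed.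
Lemma P_4_6 (R : realType) (d : R) : typ 1 d E4 E6.
Proof. rewrite /typ /E4 /E6; simp3; split; (field: (sqrt2_sq R) (sin2cos2 d)) => //. Qed.
Lemma P_4_7 (R : realType) (d : R) : typ 1 d E4 E7.
Proof. rewrite /typ /E4 /E7; simp3; split; (field: (sqrt2_sq R) (sin2cos2 d)) => //. Qed.
Lemma P_4_8 (R : realType) (d : R) : typ 1 d E4 E8.
Proof. rewrite /typ /E4 /E8; simp3; split; (field: (sqrt2_sq R) (sin2cos2 d)) => //. Qed.
Lemma P_4_9 (R : realType) (d : R) : typ 1 d E4 E9.
Proof. rewrite /typ /E4 /E9; simp3; split; (field: (sqrt2_sq R) (sin2cos2 d)) => //. Qed.
Lemma P_4_10 (R : realType) (d : R) : typ 3 d E4 E10.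
Proof. rewrite /typ /E4 /E10; simp3; split; (field: (sqrt2_sq R) (sin2cos2 d)) => //. Qed.
Lemma P_4_11 (R : realType) (d : R) : typ 4 d E4 E11.
Proof. rewrite /typ /E4 /E11; simp3; split; (field: (sqrt2_sq R) (sin2cos2 d)) => //. Qed.
Lemma P_5_6 (R : realType) (d : R) : typ 1 d E5 E6.
Proof. rewrite /typ /E5 /E6; simp3; split; (field: (sqrt2_sq R) (sin2cos2 d)) => //. Qed.
Lemma P_5_7 (R : realType) (d : R) : typ 1 d E5 E7.
Proof. rewrite /typ /E5 /E7; simp3; split; (field: (sqrt2_sq R) (sin2cos2 d)) => //. Qed.
Lemma P_5_8 (R : realType) (d : R) : typ 4 d E5 E8.
Proof. rewrite /typ /E5 /E8; simp3; split; (field: (sqrt2_sq R) (sin2cos2 d)) => //. Qed.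
Lemma P_5_9 (R : realType) (d : R) : typ 3 d E5 E9.
Proof. rewrite /typ /E5 /E9; simp3; split; (field: (sqrt2_sq R) (sin2cos2 d)) => //. Qed.
Lemma P_5_10 (R : realType) (d : R) : typ 1 d E5 E10.
Proof. rewrite /typ /E5 /E10; simp3; split; (field: (sqrt2_sq R) (sin2cos2 d)) => //. Qed.
Lemma P_5_11 (R : realType) (d : R) : typ 1 d E5 E11.
Proof. rewrite /typ /E5 /E11; simp3; split; (field: (sqrt2_sq R) (sin2cos2 d)) => //. Qed.
Lemma P_6_7 (R : realType) (d : R) : typ 0 d E6 E7.
Proof. rewrite /typ /E6 /E7; simp3; split; (field: (sqrt2_sq R) (sin2cos2 d)) => //. Qed.
Lemma P_6_8 (R : realType) (d : R) : typ 1 d E6 E8.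
Proof. rewrite /typ /E6 /E8; simp3; split; (field: (sqrt2_sq R) (sin2cos2 d)) => //. Qed.
Lemma P_6_9 (R : realType) (d : R) : typ 4 d E6 E9.
Proof. rewrite /typ /E6 /E9; simp3; split; (field: (sqrt2_sq R) (sin2cos2 d)) => //. Qed.
Lemma P_6_10 (R : realType) (d : R) : typ 1 d E6 E10.
Proof. rewrite /typ /E6 /E10; simp3; split; (field: (sqrt2_sq R) (sin2cos2 d)) => //. Qed.
Lemma P_6_11 (R : realType) (d : R) : typ 3 d E6 E11.
Proof. rewrite /typ /E6 /E11; simp3; split; (field: (sqrt2_sq R) (sin2cos2 d)) => //. Qed.
Lemma P_7_8 (R : realType) (d : R) : typ 3 d E7 E8.
Proof. rewrite /typ /E7 /E8; simp3; split; (field: (sqrt2_sq R) (sin2cos2 d)) => //. Qed.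
Lemma P_7_9 (R : realType) (d : R) : typ 1 d E7 E9.
Proof. rewrite /typ /E7 /E9; simp3; split; (field: (sqrt2_sq R) (sin2cos2 d)) => //. Qed.
Lemma P_7_10 (R : realType) (d : R) : typ 4 d E7 E10.
Proof. rewrite /typ /E7 /E10; simp3; split; (field: (sqrt2_sq R) (sin2cos2 d)) => //. Qed.
Lemma P_7_11 (R : realType) (d : R) : typ 1 d E7 E11.
Proof. rewrite /typ /E7 /E11; simp3; split; (field: (sqrt2_sq R) (sin2cos2 d)) => //. Qed.
Lemma P_8_9 (R : realType) (d : R) : typ 0 d E8 E9.
Proof. rewrite /typ /E8 /E9; simp3; split; (field: (sqrt2_sq R) (sin2cos2 d)) => //. Qed.
Lemma P_8_10 (R : realType) (d : R) : typ 0 d E8 E10.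
Proof. rewrite /typ /E8 /E10; simp3; split; (field: (sqrt2_sq R) (sin2cos2 d)) => //. Qed.
Lemma P_8_11 (R : realType) (d : R) : typ 2 d E8 E11.
Proof. rewrite /typ /E8 /E11; simp3; split; (field: (sqrt2_sq R) (sin2cos2 d)) => //. Qed.
Lemma P_9_10 (R : realType) (d : R) : typ 2 d E9 E10.
Proof. rewrite /typ /E9 /E10; simp3; split; (field: (sqrt2_sq R) (sin2cos2 d)) => //. Qed.
Lemma P_9_11 (R : realType) (d : R) : typ 0 d E9 E11.
Proof. rewrite /typ /E9 /E11; simp3; split; (field: (sqrt2_sq R) (sin2cos2 d)) => //. Qed.
Lemma P_10_11 (R : realType) (d : R) : typ 0 d E10 E11.
Proof. rewrite /typ /E10 /E11; simp3; split; (field: (sqrt2_sq R) (sin2cos2 d)) => //. Qed.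


Lemma ordE (i : 'I_3) : i = i0 \/ i = i1 \/ i = i2.
Proof. by case: i => [[|[|[|i]]] hi]; [left|right;left|right;right|]; try apply/val_inj. Qed.
Ltac pickE := first [ reflexivity | left; reflexivity | right; pickE ].
Lemma edge_cases e : is_edge e -> e = E0 \/ e = E1 \/ e = E2 \/ e = E3 \/ e = E4 \/ e = E5 \/ e = E6 \/ e = E7 \/ e = E8 \/ e = E9 \/ e = E10 \/ e = E11.
Proof.
case: e => [[i b] [j b']]; rewrite /is_edge /=.
case: (ordE i) => [->|[->|->]]; case: (ordE j) => [->|[->|->]] //= _; case: b; case: b'; pickE.
Qed.
Lemma classify (R : realType) (d : R) e1 e2 : is_edge e1 -> is_edge e2 -> e1 <> e2 ->
  exists k, (k < 5)%N /\ typ k d e1 e2.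
Proof.
move=> h1 h2.
case: (edge_cases _ h1) => [->|[->|[->|[->|[->|[->|[->|[->|[->|[->|[->|->]]]]]]]]]]]; case: (edge_cases _ h2) => [->|[->|[->|[->|[->|[->|[->|[->|[->|[->|[->|->]]]]]]]]]]].
  by move=> ne; case: (ne erefl).
  by move=> _; exists 0; split; [|exact: P_0_1].
  by move=> _; exists 1; split; [|exact: P_0_2].
  by move=> _; exists 1; split; [|exact: P_0_3].
  by move=> _; exists 0; split; [|exact: P_0_4].
  by move=> _; exists 2; split; [|exact: P_0_5].
  by move=> _; exists 3; split; [|exact: P_0_6].
  by move=> _; exists 4; split; [|exact: P_0_7].
  by move=> _; exists 1; split; [|exact: P_0_8].
  by move=> _; exists 1; split; [|exact: P_0_9].
  by move=> _; exists 4; split; [|exact: P_0_10].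
  by move=> _; exists 3; split; [|exact: P_0_11].
  by move=> _; exists 0; split; [|apply: typ_sym; exact: P_0_1].
  by move=> ne; case: (ne erefl).
  by move=> _; exists 1; split; [|exact: P_1_2].
  by move=> _; exists 1; split; [|exact: P_1_3].
  by move=> _; exists 2; split; [|exact: P_1_4].
  by move=> _; exists 0; split; [|exact: P_1_5].
  by move=> _; exists 4; split; [|exact: P_1_6].
  by move=> _; exists 3; split; [|exact: P_1_7].
  by move=> _; exists 3; split; [|exact: P_1_8].
  by move=> _; exists 4; split; [|exact: P_1_9].
  by move=> _; exists 1; split; [|exact: P_1_10].
  by move=> _; exists 1; split; [|exact: P_1_11].
  by move=> _; exists 1; split; [|apply: typ_sym; exact: P_0_2].
  by move=> _; exists 1; split; [|apply: typ_sym; exact: P_1_2].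
  by move=> ne; case: (ne erefl).
  by move=> _; exists 0; split; [|exact: P_2_3].
  by move=> _; exists 4; split; [|exact: P_2_4].
  by move=> _; exists 3; split; [|exact: P_2_5].
  by move=> _; exists 0; split; [|exact: P_2_6].
  by move=> _; exists 2; split; [|exact: P_2_7].
  by move=> _; exists 1; split; [|exact: P_2_8].
  by move=> _; exists 3; split; [|exact: P_2_9].
  by move=> _; exists 1; split; [|exact: P_2_10].
  by move=> _; exists 4; split; [|exact: P_2_11].
  by move=> _; exists 1; split; [|apply: typ_sym; exact: P_0_3].
  by move=> _; exists 1; split; [|apply: typ_sym; exact: P_1_3].
  by move=> _; exists 0; split; [|apply: typ_sym; exact: P_2_3].
  by move=> ne; case: (ne erefl).
  by move=> _; exists 3; split; [|exact: P_3_4].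
  by move=> _; exists 4; split; [|exact: P_3_5].
  by move=> _; exists 2; split; [|exact: P_3_6].
  by move=> _; exists 0; split; [|exact: P_3_7].
  by move=> _; exists 4; split; [|exact: P_3_8].
  by move=> _; exists 1; split; [|exact: P_3_9].
  by move=> _; exists 3; split; [|exact: P_3_10].
  by move=> _; exists 1; split; [|exact: P_3_11].
  by move=> _; exists 0; split; [|apply: typ_sym; exact: P_0_4].
  by move=> _; exists 2; split; [|apply: typ_sym; exact: P_1_4].
  by move=> _; exists 4; split; [|apply: typ_sym; exact: P_2_4].
  by move=> _; exists 3; split; [|apply: typ_sym; exact: P_3_4].
  by move=> ne; case: (ne erefl).
  by move=> _; exists 0; split; [|exact: P_4_5].
  by move=> _; exists 1; split; [|exact: P_4_6].
  by move=> _; exists 1; split; [|exact: P_4_7].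
  by move=> _; exists 1; split; [|exact: P_4_8].
  by move=> _; exists 1; split; [|exact: P_4_9].
  by move=> _; exists 3; split; [|exact: P_4_10].
  by move=> _; exists 4; split; [|exact: P_4_11].
  by move=> _; exists 2; split; [|apply: typ_sym; exact: P_0_5].
  by move=> _; exists 0; split; [|apply: typ_sym; exact: P_1_5].
  by move=> _; exists 3; split; [|apply: typ_sym; exact: P_2_5].
  by move=> _; exists 4; split; [|apply: typ_sym; exact: P_3_5].
  by move=> _; exists 0; split; [|apply: typ_sym; exact: P_4_5].
  by move=> ne; case: (ne erefl).
  by move=> _; exists 1; split; [|exact: P_5_6].
  by move=> _; exists 1; split; [|exact: P_5_7].
  by move=> _; exists 4; split; [|exact: P_5_8].
  by move=> _; exists 3; split; [|exact: P_5_9].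
  by move=> _; exists 1; split; [|exact: P_5_10].
  by move=> _; exists 1; split; [|exact: P_5_11].
  by move=> _; exists 3; split; [|apply: typ_sym; exact: P_0_6].
  by move=> _; exists 4; split; [|apply: typ_sym; exact: P_1_6].
  by move=> _; exists 0; split; [|apply: typ_sym; exact: P_2_6].
  by move=> _; exists 2; split; [|apply: typ_sym; exact: P_3_6].
  by move=> _; exists 1; split; [|apply: typ_sym; exact: P_4_6].
  by move=> _; exists 1; split; [|apply: typ_sym; exact: P_5_6].
  by move=> ne; case: (ne erefl).
  by move=> _; exists 0; split; [|exact: P_6_7].
  by move=> _; exists 1; split; [|exact: P_6_8].
  by move=> _; exists 4; split; [|exact: P_6_9].
  by move=> _; exists 1; split; [|exact: P_6_10].
  by move=> _; exists 3; split; [|exact: P_6_11].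
  by move=> _; exists 4; split; [|apply: typ_sym; exact: P_0_7].
  by move=> _; exists 3; split; [|apply: typ_sym; exact: P_1_7].
  by move=> _; exists 2; split; [|apply: typ_sym; exact: P_2_7].
  by move=> _; exists 0; split; [|apply: typ_sym; exact: P_3_7].
  by move=> _; exists 1; split; [|apply: typ_sym; exact: P_4_7].
  by move=> _; exists 1; split; [|apply: typ_sym; exact: P_5_7].
  by move=> _; exists 0; split; [|apply: typ_sym; exact: P_6_7].
  by move=> ne; case: (ne erefl).
  by move=> _; exists 3; split; [|exact: P_7_8].
  by move=> _; exists 1; split; [|exact: P_7_9].
  by move=> _; exists 4; split; [|exact: P_7_10].
  by move=> _; exists 1; split; [|exact: P_7_11].
  by move=> _; exists 1; split; [|apply: typ_sym; exact: P_0_8].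
  by move=> _; exists 3; split; [|apply: typ_sym; exact: P_1_8].
  by move=> _; exists 1; split; [|apply: typ_sym; exact: P_2_8].
  by move=> _; exists 4; split; [|apply: typ_sym; exact: P_3_8].
  by move=> _; exists 1; split; [|apply: typ_sym; exact: P_4_8].
  by move=> _; exists 4; split; [|apply: typ_sym; exact: P_5_8].
  by move=> _; exists 1; split; [|apply: typ_sym; exact: P_6_8].
  by move=> _; exists 3; split; [|apply: typ_sym; exact: P_7_8].
  by move=> ne; case: (ne erefl).
  by move=> _; exists 0; split; [|exact: P_8_9].
  by move=> _; exists 0; split; [|exact: P_8_10].
  by move=> _; exists 2; split; [|exact: P_8_11].
  by move=> _; exists 1; split; [|apply: typ_sym; exact: P_0_9].
  by move=> _; exists 4; split; [|apply: typ_sym; exact: P_1_9].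
  by move=> _; exists 3; split; [|apply: typ_sym; exact: P_2_9].
  by move=> _; exists 1; split; [|apply: typ_sym; exact: P_3_9].
  by move=> _; exists 1; split; [|apply: typ_sym; exact: P_4_9].
  by move=> _; exists 3; split; [|apply: typ_sym; exact: P_5_9].
  by move=> _; exists 4; split; [|apply: typ_sym; exact: P_6_9].
  by move=> _; exists 1; split; [|apply: typ_sym; exact: P_7_9].
  by move=> _; exists 0; split; [|apply: typ_sym; exact: P_8_9].
  by move=> ne; case: (ne erefl).
  by move=> _; exists 2; split; [|exact: P_9_10].
  by move=> _; exists 0; split; [|exact: P_9_11].
  by move=> _; exists 4; split; [|apply: typ_sym; exact: P_0_10].
  by move=> _; exists 1; split; [|apply: typ_sym; exact: P_1_10].
  by move=> _; exists 1; split; [|apply: typ_sym; exact: P_2_10].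
  by move=> _; exists 3; split; [|apply: typ_sym; exact: P_3_10].
  by move=> _; exists 3; split; [|apply: typ_sym; exact: P_4_10].
  by move=> _; exists 1; split; [|apply: typ_sym; exact: P_5_10].
  by move=> _; exists 1; split; [|apply: typ_sym; exact: P_6_10].
  by move=> _; exists 4; split; [|apply: typ_sym; exact: P_7_10].
  by move=> _; exists 0; split; [|apply: typ_sym; exact: P_8_10].
  by move=> _; exists 2; split; [|apply: typ_sym; exact: P_9_10].
  by move=> ne; case: (ne erefl).
  by move=> _; exists 0; split; [|exact: P_10_11].
  by move=> _; exists 3; split; [|apply: typ_sym; exact: P_0_11].
  by move=> _; exists 1; split; [|apply: typ_sym; exact: P_1_11].
  by move=> _; exists 4; split; [|apply: typ_sym; exact: P_2_11].
  by move=> _; exists 1; split; [|apply: typ_sym; exact: P_3_11].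
  by move=> _; exists 4; split; [|apply: typ_sym; exact: P_4_11].
  by move=> _; exists 1; split; [|apply: typ_sym; exact: P_5_11].
  by move=> _; exists 3; split; [|apply: typ_sym; exact: P_6_11].
  by move=> _; exists 1; split; [|apply: typ_sym; exact: P_7_11].
  by move=> _; exists 2; split; [|apply: typ_sym; exact: P_8_11].
  by move=> _; exists 0; split; [|apply: typ_sym; exact: P_9_11].
  by move=> _; exists 0; split; [|apply: typ_sym; exact: P_10_11].
  by move=> ne; case: (ne erefl).
Qed.

Section M.
Variable R : realType.
Local Notation q := (Num.sqrt (3%:R : R)).
Local Notation r := (Num.sqrt (2%:R : R)).

Lemma sqrt3_sq : q ^+ 2 = 3.
Proof. by rewrite sqr_sqrtr // ler0n. Qed.
Lemma qb1 (x : R) : 0 <= x -> x ^+ 2 = 3 -> 1732 < 1000 * x. Proof. move=> h0 h. nra. Qed.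
Lemma qb2 (x : R) : 0 <= x -> x ^+ 2 = 3 -> 10000 * x < 17321. Proof. move=> h0 h. nra. Qed.
Lemma mb (m x : R) : 0 <= m -> m ^+ 2 = 28 * x - 48 -> 10000 * x < 17321 -> 100 * m <= 71.
Proof. move=> h0 h hx. nra. Qed.
Lemma f3 (m x : R) : 0 <= m -> 100 * m <= 71 -> 1732 < 1000 * x -> 10000 * x < 17321 ->
  0 < 672 - 384 * x - 16 * (4 - 2 * x) * m.
Proof. move=> *. nra. Qed.
Lemma f4 (m x : R) : 0 <= m -> 1732 < 1000 * x -> 10000 * x < 17321 ->
  0 < 672 - 384 * x + 16 * (4 - 2 * x) * m.
Proof. move=> *. nra. Qed.
Lemma q_bounds : 1732 < 1000 * q /\ 10000 * q < 17321.
Proof. by split; [apply: qb1|apply: qb2]; rewrite ?sqrtr_ge0 ?sqrt3_sq. Qed.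

Lemma lb_core (c s : R) k : c ^+ 2 = 4 - 2 * q -> s ^+ 2 = 2 * q - 3 -> 0 <= c -> 0 <= s ->
  (k < 5)%N ->
  forall x y : R,
  (match k with
  | 0 => x ^+ 2 = (8 * c * s) ^+ 2 /\ y = 32 * c ^+ 2 - 16 * c ^+ 4
  | 1 => x ^+ 2 = (4 * c * s) ^+ 2 /\ y = 16 - 4 * c ^+ 4
  | 2 => x ^+ 2 = (16 * c * s) ^+ 2 /\ y = 64 * c ^+ 2 - 64 * c ^+ 4
  | 3 => x ^+ 2 = (4 * c * s + 4 * r - 8 * r * c ^+ 2) ^+ 2 /\
         y = 16 - 32 * c ^+ 2 + 28 * c ^+ 4 - 16 * r * c ^+ 3 * s
  | _ => x ^+ 2 = (4 * c * s - 4 * r + 8 * r * c ^+ 2) ^+ 2 /\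
         y = 16 - 32 * c ^+ 2 + 28 * c ^+ 4 + 16 * r * c ^+ 3 * s
  end) -> 0 < y /\ (2 - q) * y <= x ^+ 2.
Proof.
move=> hc hs c0 s0 k5 x y.
have hq := sqrt3_sq; have hr := sqrt2_sq R.
have [ql qu] := q_bounds.
have r0 : 0 <= r := sqrtr_ge0 _.
have hp : (c * s) ^+ 2 = 14 * q - 24.
  rewrite exprMn hc hs; ring: hq.
have p0 : 0 <= c * s by rewrite mulr_ge0.
have hm : (r * (c * s)) ^+ 2 = 28 * q - 48.
  by rewrite exprMn hp hr; ring.
have m0 : 0 <= r * (c * s) by rewrite mulr_ge0.
have mu := mb _ _ m0 hm qu.
case: k k5 => [|[|[|[|[|k]]]]] // _ [-> ->]; rewrite -subr_ge0.
- have -> : 32 * c ^+ 2 - 16 * c ^+ 4 = 192 * q - 320 by ring: hc hq.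
  have -> : (8 * c * s) ^+ 2 - (2 - q) * (192 * q - 320) = 32 * (6 * q - 10).
    by ring: hc hs hq.
  (clear -ql qu; split; lra).
- have -> : 16 - 4 * c ^+ 4 = 64 * q - 96 by ring: hc hq.
  have -> : (4 * c * s) ^+ 2 - (2 - q) * (64 * q - 96) = 0 by ring: hc hs hq.
  (clear -ql qu; split; lra).
- have -> : 64 * c ^+ 2 - 64 * c ^+ 4 = 64 * (14 * q - 24) by ring: hc hq.
  have -> : (16 * c * s) ^+ 2 - (2 - q) * (64 * (14 * q - 24)) = 64 * (4 * q - 6) by ring: hc hs hq.
  (clear -ql qu; split; lra).
- have -> : 16 - 32 * c ^+ 2 + 28 * c ^+ 4 - 16 * r * c ^+ 3 * s =
     672 - 384 * q - 16 * (4 - 2 * q) * (r * (c * s)) by ring: hc hq.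
  have -> : (4 * c * s + 4 * r - 8 * r * c ^+ 2) ^+ 2 -
    (2 - q) * (672 - 384 * q - 16 * (4 - 2 * q) * (r * (c * s))) = 224 - 128 * q by ring: hc hs hq hr.
  (split; [exact: f3| clear -ql qu; lra]).
- have -> : 16 - 32 * c ^+ 2 + 28 * c ^+ 4 + 16 * r * c ^+ 3 * s =
     672 - 384 * q + 16 * (4 - 2 * q) * (r * (c * s)) by ring: hc hq.
  have -> : (4 * c * s - 4 * r + 8 * r * c ^+ 2) ^+ 2 -
    (2 - q) * (672 - 384 * q + 16 * (4 - 2 * q) * (r * (c * s))) = 224 - 128 * q by ring: hc hs hq hr.
  (split; [exact: f4| clear -ql qu; lra]).
Qed.
End M.

Section M2.
Variable R : realType.
Local Notation q := (Num.sqrt (3%:R : R)).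
Local Notation r := (Num.sqrt (2%:R : R)).

Lemma q_le2 : q <= 2.
Proof. have [_ qu] := q_bounds R. lra. Qed.

Lemma dO_facts (dO : R) : 0 <= dO <= pi / 2 ->
  tan dO = Num.sqrt (Num.sqrt 3) / Num.sqrt 2 ->
  [/\ cos dO ^+ 2 = 4 - 2 * q, sin dO ^+ 2 = 2 * q - 3, 0 <= cos dO & 0 <= sin dO].
Proof.
move=> /andP[h0 h1] ht.
have pi0 : 0 < pi :> R := pi_gt0 R.
have c0 : 0 <= cos dO by apply: cos_ge0_pihalf; apply/andP; split; lra.
have s0 : 0 <= sin dO by apply: sin_ge0_pi; apply/andP; split; lra.
have q0 : 0 < q by rewrite sqrtr_gt0 ltr0n.
have t0 : 0 < Num.sqrt q / r by rewrite divr_gt0 // sqrtr_gt0 // ltr0n.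
have cn0 : cos dO != 0.
  apply/eqP => hc; move: ht; rewrite /tan hc invr0 mulr0 => ht.
  by move: t0; rewrite -ht ltxx.
have hsc : sin dO = Num.sqrt q / r * cos dO by rewrite -ht /tan divfK.
have hq := sqrt3_sq R; have hr := sqrt2_sq R.
have ht2 : (Num.sqrt q / r) ^+ 2 = q / 2.
  by rewrite expr_div_n sqr_sqrtr ?hr // ltW.
have e : cos dO ^+ 2 * (2 + q) = 2.
  have := cos2Dsin2 dO; rewrite hsc exprMn ht2 => e.
  rewrite [RHS](_ : 2 = 2 * (cos dO ^+ 2 + q / 2 * cos dO ^+ 2)); first by field.
  by rewrite e mulr1.
have hc : cos dO ^+ 2 = 4 - 2 * q.
  have -> : cos dO ^+ 2 = cos dO ^+ 2 * ((2 + q) * (2 - q)).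
    by rewrite (_ : (2 + q) * (2 - q) = 1) ?mulr1 //; ring: hq.
  by rewrite mulrA e; ring.
split => //.
by rewrite sin2cos2 hc; ring.
Qed.

Lemma fO_dO (dO : R) : cos dO ^+ 2 = 4 - 2 * q -> sin dO ^+ 2 = 2 * q - 3 ->
  fO dO = 2 - q.
Proof.
move=> hc hs; have hq := sqrt3_sq R.
have [ql qu] := q_bounds R.
rewrite /fO (_ : 2 * dO = dO + dO); last by ring.
rewrite sinD cosD.
have -> : cos dO * cos dO - sin dO * sin dO - 3 = 4 - 4 * q by ring: hc hs.
have -> : cos dO * cos dO - sin dO * sin dO + 5 = 12 - 4 * q by ring: hc hs.
have -> : 4 * (sin dO * cos dO + cos dO * sin dO) ^+ 2 = 16 * (14 * q - 24) by ring: hc hs hq.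
have n1 : 4 - 4 * q != 0 by apply/eqP => h; lra.
have n2 : 12 - 4 * q != 0 by apply/eqP => h; lra.
rewrite -[2 - q](mulfK (mulf_neq0 n1 n2)); congr (_ / _); ring: hq.
Qed.

End M2.

Section M3.
Variable R : realType.
Local Notation q := (Num.sqrt (3%:R : R)).

Lemma line_dist_ge0 (p u p' v : vec R) : 0 <= line_dist p u p' v.
Proof.
rewrite /line_dist; apply: lb_le_inf.
  by exists (enorm ((p + 0 *: u) - (p' + 0 *: v))); exists 0, 0.
by move=> x [s [t ->]]; rewrite /enorm sqrtr_ge0.
Qed.

Lemma dist_wn (d : R) e1 e2 : 0 < Dn d e1 e2 ->
  line_dist (edge_mid R e1) (Ldir d e1) (edge_mid R e2) (Ldir d e2) =
  Num.sqrt (wn d e1 e2 ^+ 2 / Dn d e1 e2).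
Proof. by move=> h; rewrite line_dist_eq // lt0r_neq0. Qed.

Lemma E02 : [/\ is_edge E0, is_edge E2 & E0 <> E2].
Proof. by split => // /(congr1 (fun e => val e.2.1)). Qed.

Lemma D02 (d : R) : 0 < 16 - 4 * cos d ^+ 4.
Proof.
have h := cos2Dsin2 d; have hs := sqr_ge0 (sin d); have hc := sqr_ge0 (cos d).
have -> : cos d ^+ 4 = (cos d ^+ 2) ^+ 2 by rewrite -exprM.
nra.
Qed.

Lemma dmin_le (d : R) : dmin d <= Num.sqrt (2 - q).
Proof.
have [h1 h2 ne] := E02.
case: (P_0_2 R d) => hw hD.
have Dp : 0 < Dn d E0 E2 by rewrite hD; exact: D02.
apply: (le_trans (ge_inf _ _)).
- exists 0 => y [e1 [e2 [_ _ _ ->]]]; exact: line_dist_ge0.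
- by exists E0, E2; split.
rewrite dist_wn // ler_sqrt; last by rewrite subr_ge0 q_le2.
rewrite ler_pdivrMr // hw hD -subr_ge0.
have hq := sqrt3_sq R.
have hs := sin2cos2 d.
have key : (8 + 4 * q) * ((2 - q) * (16 - 4 * cos d ^+ 4) - (4 * cos d * sin d) ^+ 2)
   = ((8 + 4 * q) * cos d ^+ 2 - 8) ^+ 2 by ring: hq hs.
have := sqr_ge0 ((8 + 4 * q) * cos d ^+ 2 - 8); rewrite -key pmulr_rge0 //.
Qed.

Lemma dmin_dO (dO : R) : cos dO ^+ 2 = 4 - 2 * q -> sin dO ^+ 2 = 2 * q - 3 ->
  0 <= cos dO -> 0 <= sin dO -> dmin dO = Num.sqrt (2 - q).
Proof.
move=> hc hs c0 s0.
have hq := sqrt3_sq R.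
rewrite /dmin; apply: inf_min.
  have [h1 h2 ne] := E02.
  case: (P_0_2 R dO) => hw hD.
  have Dp : 0 < Dn dO E0 E2 by rewrite hD; exact: D02.
  exists E0, E2; split => //.
  rewrite dist_wn //; congr Num.sqrt.
  rewrite hw (_ : (4 * cos dO * sin dO) ^+ 2 = (2 - q) * Dn dO E0 E2) ?mulfK ?lt0r_neq0 //.
  by rewrite hD; ring: hc hs hq.
move=> x [e1 [e2 [h1 h2 ne ->]]].
have [k [k5 ht]] := classify R dO _ _ h1 h2 ne.
have [Dp le] := lb_core _ _ _ _ hc hs c0 s0 k5 (wn dO e1 e2) (Dn dO e1 e2) ht.
rewrite dist_wn // ler_sqrt; last by rewrite divr_ge0 ?sqr_ge0 // ltW.
by rewrite ler_pdivlMr // mulrC.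
Qed.

End M3.

Theorem theorem1 (R : realType) (deltaO : R) :
  0 <= deltaO <= pi / 2 ->
  tan deltaO = Num.sqrt (Num.sqrt 3) / Num.sqrt 2 ->
  [/\ (forall delta : R, 0 <= delta <= pi / 2 -> dmin delta <= dmin deltaO),
      dmin deltaO ^+ 2 = fO deltaO
    & fO deltaO = 2 - Num.sqrt 3].
Proof.
move=> hd ht.
have [hc hs c0 s0] := dO_facts _ _ hd ht.
have dmO := dmin_dO _ _ hc hs c0 s0.
have fOe := fO_dO _ _ hc hs.
split.
- by move=> d _; rewrite dmO; exact: dmin_le.
- by rewrite dmO fOe sqr_sqrtr // subr_ge0 q_le2.
- exact: fOe.
Qed.
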